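(* Let $(M,d)$ be a compact metric space, $\varphi:M\to M$ continuous, and $\{G_n\}\subset B(M)$ such that there exists $\{G^{(k)}\}\subset B(M)$ with $\lim_{k\to\infty}\limsup_{n\to\infty}n^{-1}\|G_n-S_nG^{(k)}\|_\infty=0$. Then $\lim_{k\to\infty}\limsup_{n\to\infty}n^{-1}\|G_n-k^{-1}S_nG_k\|_\infty=0$.
   Context: $B(M)$: bounded Borel real functions, $\|f\|_\infty=\sup|f|$; $S_nG=\sum_{k=0}^{n-1}G\circ\varphi^k$. *)

(* Defs.v *)
From HB Require Import structures.
From mathcomp Require Import all_boot all_order all_algebra.
From mathcomp Require Import all_classical all_reals all_analysis.
Set Implicit Arguments. Unset Strict Implicit. Unset Printing Implicit Defensive.
Import Order.TTheory GRing.Theory Num.Theory.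
Import numFieldNormedType.Exports.
Local Open Scope classical_set_scope.
Local Open Scope ring_scope.

Definition borel_set (T : topologicalType) (A : set T) : Prop :=
  <<s [set U : set T | open U] >> A.

Definition borel_fun (T : topologicalType) (R : realType) (f : T -> R) : Prop :=
  forall B : set R, measurable B -> borel_set (f @^-1` B).

Definition bounded_fun (T : Type) (R : realType) (f : T -> R) : Prop :=
  exists C : R, forall x, `|f x| <= C.

Definition BM (T : topologicalType) (R : realType) (f : T -> R) : Prop :=
  borel_fun f /\ bounded_fun f.

(* sup norm ||f||_oo = sup_x |f x| (meaningful for bounded f) *)
Definition supnorm (T : Type) (R : realType) (f : T -> R) : R :=
  sup [set `|f x| | x in [set: T]].

Definition birkhoff (T : Type) (R : realType) (phi : T -> T) (n : nat)
  (G : T -> R) : T -> R :=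
  fun x => \sum_(0 <= k < n) G (iter k phi x).

(* Main.v *)
Require Import Defs.
From HB Require Import structures.
From mathcomp Require Import all_boot all_order all_algebra.
From mathcomp Require Import all_classical all_reals all_analysis.
From mathcomp Require Import lra.
Import Order.TTheory GRing.Theory Num.Theory.
Import numFieldNormedType.Exports.
Local Open Scope classical_set_scope.
Local Open Scope ring_scope.
Section RealPart.
Variables (R : realType) (T : Type).

Lemma supnorm_ge (f : T -> R) : Defs.bounded_fun f -> forall x, `|f x| <= supnorm f.
Proof.
move=> [C hC] x; apply: ub_le_sup; last by exists x.
exists C => _ [y _ <-].
exact: hC.
Qed.

Lemma supnorm_le (f : T -> R) C : 0 <= C -> (forall x, `|f x| <= C) ->
  supnorm f <= C.
Proof.
move=> C0 hC; rewrite /supnorm.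
have [->|ne] := eqVneq [set `|f x| | x in [set: T]] set0; first by rewrite sup0.
apply: ge_sup; first exact/set0P.
by move=> _ [y _ <-]; exact: hC.
Qed.

Lemma supnorm_ge0 (f : T -> R) : Defs.bounded_fun f -> 0 <= supnorm f.
Proof.
move=> bf; rewrite /supnorm.
have [->|/set0P [_ [y _ _]]] := eqVneq [set `|f x| | x in [set: T]] set0.
  by rewrite sup0.
exact: le_trans (normr_ge0 _) (@supnorm_ge f bf y).
Qed.

Lemma bounded_sub (f g : T -> R) : Defs.bounded_fun f -> Defs.bounded_fun g ->
  Defs.bounded_fun (f \- g).
Proof.
move=> [C hC] [D hD]; exists (C + D) => x /=.
by rewrite (le_trans (ler_normB _ _))// lerD.
Qed.

Lemma bounded_scale (f : T -> R) c : Defs.bounded_fun f -> Defs.bounded_fun (c \*: f).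
Proof.
move=> [C hC]; exists (`|c| * C) => x /=.
by rewrite normrM ler_wpM2l.
Qed.

Lemma birkhoff_bound (phi : T -> T) n (f : T -> R) C :
  (forall x, `|f x| <= C) -> forall x, `|birkhoff phi n f x| <= n%:R * C.
Proof.
move=> hC x; rewrite /birkhoff (le_trans (ler_norm_sum _ _ _))//.
apply: le_trans (ler_sum _ (fun i _ => hC _)) _.
by rewrite sumr_const_nat subn0 mulr_natl.
Qed.

Lemma bounded_birkhoff (phi : T -> T) n (f : T -> R) : Defs.bounded_fun f ->
  Defs.bounded_fun (birkhoff phi n f).
Proof. by move=> [C hC]; exists (n%:R * C); exact: birkhoff_bound. Qed.

Lemma birkhoffB (phi : T -> T) n (f g : T -> R) x :
  birkhoff phi n (f \- g) x = birkhoff phi n f x - birkhoff phi n g x.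
Proof. by rewrite /birkhoff -sumrB. Qed.

Lemma shift_step (f : nat -> R) n l :
  \sum_(0 <= i < n) f (i + l.+1)%N = \sum_(0 <= i < n) f (i + l)%N + f (n + l)%N - f l.
Proof.
elim: n => [|n IH]; first by rewrite !big_geq // add0n add0r subrr.
rewrite !big_nat_recr //= IH addnS addSn; lra.
Qed.

Lemma shift_bound (f : nat -> R) C n l : (forall m, `|f m| <= C) ->
  `|\sum_(0 <= i < n) f (i + l)%N - \sum_(0 <= i < n) f i| <= l%:R * (2 * C).
Proof.
move=> hC; elim: l => [|l IH].
  have -> : \sum_(0 <= i < n) f (i + 0)%N = \sum_(0 <= i < n) f i.
    by apply: eq_bigr => i _; rewrite addn0.
  by rewrite subrr normr0 mul0r.
rewrite shift_step.
have -> : \sum_(0 <= i < n) f (i + l)%N + f (n + l)%N - f l - \sum_(0 <= i < n) f i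
  = (\sum_(0 <= i < n) f (i + l)%N - \sum_(0 <= i < n) f i) + (f (n + l)%N - f l).
  lra.
rewrite (le_trans (ler_normD _ _))// -natr1 mulrDl mul1r lerD//.
by rewrite (le_trans (ler_normB _ _))// mulr2n mulrDl mul1r lerD.
Qed.

Lemma double_birkhoff (phi : T -> T) (H : T -> R) C n k x :
  (forall y, `|H y| <= C) -> 0 <= C ->
  `|birkhoff phi n (birkhoff phi k H) x - k%:R * birkhoff phi n H x|
    <= k%:R * (k%:R * (2 * C)).
Proof.
move=> hC C0; set f := fun m => H (iter m phi x).
have hf : forall m, `|f m| <= C by move=> m; exact: hC.
have -> : birkhoff phi n (birkhoff phi k H) x =
    \sum_(0 <= l < k) \sum_(0 <= i < n) f (i + l)%N.
  rewrite /birkhoff exchange_big_nat /=; apply: eq_bigr => l _.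
  by apply: eq_bigr => i _; rewrite /f addnC iterD.
have -> : k%:R * birkhoff phi n H x = \sum_(0 <= l < k) \sum_(0 <= i < n) f i.
  by rewrite sumr_const_nat subn0 mulr_natl /birkhoff.
rewrite -sumrB (le_trans (ler_norm_sum _ _ _))//.
apply: (@le_trans _ _ (\sum_(0 <= l < k) k%:R * (2 * C))); last first.
  by rewrite sumr_const_nat subn0 [X in _ <= X]mulr_natl.
apply: ler_sum_nat => l /andP[_ lk].
rewrite (le_trans (@shift_bound f C n l hf))// ler_wpM2r ?mulr_ge0// ler_nat ltnW//.
Qed.

End RealPart.
Section Key.
Variables (R : realType) (T : Type).

Lemma key (phi : T -> T) (G : nat -> T -> R) (H : T -> R) (C : R) k n :
  (0 < k)%N -> (0 < n)%N -> 0 <= C -> (forall x, `|H x| <= C) ->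
  Defs.bounded_fun (G n) -> Defs.bounded_fun (G k) ->
  n%:R^-1 * supnorm (G n \- k%:R^-1 \*: birkhoff phi n (G k)) <=
  n%:R^-1 * supnorm (G n \- birkhoff phi n H) + n%:R^-1 * (k%:R * (2 * C))
  + k%:R^-1 * supnorm (G k \- birkhoff phi k H).
Proof.
move=> k0 n0 C0 hC bn bk.
have bH : Defs.bounded_fun H by exists C.
have b1 : Defs.bounded_fun (G n \- birkhoff phi n H).
  by apply: bounded_sub => //; exact: bounded_birkhoff.
have b2 : Defs.bounded_fun (G k \- birkhoff phi k H).
  by apply: bounded_sub => //; exact: bounded_birkhoff.
set s1 := supnorm (G n \- birkhoff phi n H).
set s2 := supnorm (G k \- birkhoff phi k H).
have s10 : 0 <= s1 by exact: supnorm_ge0.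
have s20 : 0 <= s2 by exact: supnorm_ge0.
have kR0 : (0 : R) < k%:R by rewrite ltr0n.
have nR0 : (0 : R) < n%:R by rewrite ltr0n.
set ki := k%:R^-1.
have ki0 : 0 < ki by rewrite invr_gt0.
have kik : ki * k%:R = 1 by rewrite mulVf // gt_eqF.
have main : supnorm (G n \- k%:R^-1 \*: birkhoff phi n (G k)) <=
    s1 + k%:R * (2 * C) + ki * (n%:R * s2).
  apply: supnorm_le.
    by rewrite !addr_ge0 // !mulr_ge0 // ?ltW.
  move=> x /=.
  set a := G n x; set b := birkhoff phi n H x.
  set c := birkhoff phi n (birkhoff phi k H) x.
  set g := birkhoff phi n (G k) x.
  have e : a - ki * g = (a - b) + ki * (k%:R * b - c) - ki * (g - c).
    rewrite !mulrBr mulrA kik mul1r; lra.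
  have h1 : `|a - b| <= s1 by exact: (@supnorm_ge _ _ _ b1 x).
  have h2 : `|k%:R * b - c| <= k%:R * (k%:R * (2 * C)).
    by rewrite distrC; exact: double_birkhoff.
  have h3 : `|g - c| <= n%:R * s2.
    rewrite /g /c -birkhoffB; apply: birkhoff_bound => y.
    exact: (@supnorm_ge _ _ _ b2 y).
  have -> : k%:R^-1 *: g = ki * g by [].
  rewrite e.
  rewrite (le_trans (ler_normB _ _))// (le_trans (lerD (ler_normD _ _) (lexx _)))//.
  rewrite !normrM gtr0_norm // -addrA -[X in _ <= X]addrA lerD // lerD //.
    by rewrite (le_trans (ler_wpM2l (ltW ki0) h2))// [ki * _]mulrA kik mul1r.
  by rewrite ler_pM2l.
have nin : n%:R^-1 * n%:R = 1 :> R by rewrite mulVf // gt_eqF.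
apply: (le_trans (ler_wpM2l _ main)); first by rewrite invr_ge0 ltW.
have e2 : n%:R^-1 * (ki * (n%:R * s2)) = ki * s2.
  by rewrite mulrCA [n%:R^-1 * (_ * _)]mulrA nin mul1r.
by rewrite !mulrDr e2.
Qed.

End Key.
Section Esup.
Variable R : realType.
Local Open Scope ereal_scope.

Lemma esup_le_ev (u : nat -> \bar R) x N :
  (forall n, (N <= n)%N -> u n <= x) -> limn_esup u <= x.
Proof.
move=> hu; rewrite /limn_esup /limf_esup.
apply: (@le_trans _ _ (ereal_sup (u @` [set n | (N <= n)%N]))).
  by apply: ereal_inf_lbound; exists [set n | (N <= n)%N] => //; exists N.
by apply: ge_ereal_sup => _ [n hn <-]; exact: hu.
Qed.

Lemma esup_lt_ev (u : nat -> \bar R) x :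
  limn_esup u < x -> exists N, forall n, (N <= n)%N -> u n < x.
Proof.
rewrite /limn_esup /limf_esup => /ereal_inf_lt [_ [V [N _ HN] <-] hlt].
exists N => n Nn; apply: le_lt_trans hlt.
by apply: ereal_sup_ubound; exists n => //; apply: HN.
Qed.

Lemma esup_ge0 (u : nat -> \bar R) : (forall n, 0 <= u n) -> 0 <= limn_esup u.
Proof.
move=> hu; rewrite /limn_esup /limf_esup.
apply: le_ereal_inf_tmp => _ [V [N _ HN] <-].
apply: le_trans (hu N) _.
by apply: ereal_sup_ubound; exists N => //; apply: HN => /=.
Qed.

End Esup.
Theorem lemma6p3 (R : realType) (M : metricType R) (phi : M -> M)
  (G : nat -> M -> R) :
  compact [set: M] ->
  continuous phi ->
  (forall n, BM (G n)) ->
  (exists Gk : nat -> M -> R, (forall k, BM (Gk k)) /\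
     (fun k => limn_esup (fun n =>
        ((n%:R)^-1 * supnorm (G n \- birkhoff phi n (Gk k)))%:E)) @ \oo --> 0%E) ->
  (fun k => limn_esup (fun n =>
     ((n%:R)^-1 * supnorm (G n \- (k%:R)^-1 \*: birkhoff phi n (G k)))%:E))
     @ \oo --> 0%E.
Proof.
move=> _ _ hG [Gk [hGk hlim]].
have bG : forall n, Defs.bounded_fun (G n) by move=> n; case: (hG n).
apply: limn_esup_le_cvg; last first.
  move=> k; apply: esup_ge0 => n; rewrite lee_fin mulr_ge0 ?invr_ge0 //.
  apply: supnorm_ge0; apply: bounded_sub => //.
  by apply: bounded_scale; exact: bounded_birkhoff.
apply/lee_addgt0Pr => eps eps0; rewrite add0e.
set e := eps / 3%:R.
have e0 : (0 : R) < e by rewrite divr_gt0.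
have eps3 : eps = e + e + e by rewrite /e; lra.
move/fine_cvgP: hlim => [[N0 _ HN0] /cvgr_lt /(_ e e0) [N1 _ HN1]].
set j := maxn N0 N1.
have Ejfin := HN0 j (leq_maxl _ _).
have Ejlt := HN1 j (leq_maxr _ _).
have [_ [C hC]] := hGk j.
have hC' : forall x, `|Gk j x| <= `|C|.
  by move=> x; rewrite (le_trans (hC x)) // ler_norm.
have /esup_lt_ev [N2 HN2] :
    (limn_esup (fun n => ((n%:R)^-1 * supnorm (G n \- birkhoff phi n (Gk j)))%:E)
    < e%:E)%E.
  by rewrite -(fineK Ejfin) lte_fin.
apply: (@esup_le_ev _ _ _ (maxn N2 1)) => k.
rewrite geq_max => /andP[N2k k0].
set D := k%:R * (2 * `|C|).
apply: (@esup_le_ev _ _ _ (maxn (maxn N2 1) (Num.truncn (D / e)).+1)) => n.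
rewrite !geq_max => /andP[/andP[N2n n0] Dn].
rewrite lee_fin eps3.
apply: le_trans (@key R M phi G (Gk j) `|C| k n k0 n0 (normr_ge0 C) hC' (bG n) (bG k)) _.
have h1 := HN2 n N2n; rewrite lte_fin in h1.
have h2 := HN2 k N2k; rewrite lte_fin in h2.
have h3 : n%:R^-1 * D < e.
  have nR0 : (0 : R) < n%:R by rewrite ltr0n.
  rewrite ltr_pdivrMl // -ltr_pdivrMr //.
  by rewrite (lt_le_trans (truncnS_gt _)) // ler_nat.
by rewrite -/D; apply/ltW/ltrD => //; apply: ltrD.
Qed.
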